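(* Let $\mathcal H$ be a Hilbert space, let $\mathfrak H\subset\mathcal H$ be a closed subspace, $\mathfrak N=\mathcal H\ominus\mathfrak H$, and let $A_0:\mathfrak H\to\mathcal H$ be a Hermitian contraction with ${\rm dom}\,A_0=\mathfrak H$. Let $T$ be a qsc-extension of $A_0$ in $\mathcal H$ and let $\tau=\{T;\mathfrak N,\mathfrak N,\mathfrak H\}$ be the pqs-system given by the block decomposition of $T$ with respect to $\mathcal H=\mathfrak N\oplus\mathfrak H$. Then the following are equivalent: (i) $A_0$ is simple; (ii) $T$ is $\mathfrak N$-minimal; (iii) $\tau$ is minimal.
   Context: $A_0$ Hermitian means $(A_0f,g)=(f,A_0g)$ for $f,g\in{\rm dom}\,A_0$. $A_0$ is simple if there is no nonzero subspace of ${\rm dom}\,A_0$ invariant under $A_0$ (i.e. $A_0$ has no selfadjoint part). A quasi-selfadjoint contraction (qsc-operator) is a contraction $T\in\mathbf L(\mathcal H)$ with ${\rm ker}(T-T^* )\neq\{0\}$; $T$ is a qsc-extension of $A_0$ if $A_0\subset T$ and $A_0\subset T^*$ (equivalently ${\rm dom}\,A_0\subset{\rm ker}(T-T^* )$, so ${\rm ran}(T-T^* )\subset\mathfrak N$). $T$ is $\mathfrak N$-minimal if $\overline{\rm span}\{T^n\mathfrak N:n\ge0\}=\mathcal H$. A pqs-system $\{T;\mathfrak N,\mathfrak N,\mathfrak H\}$ has $T=\begin{pmatrix}D&C\\ B&A\end{pmatrix}:\mathfrak N\oplus\mathfrak H\to\mathfrak N\oplus\mathfrak H$ contractive with ${\rm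 ran}(T-T^* )\subset\mathfrak N$; minimal means $\overline{\rm span}\{A^nB\mathfrak N\}=\mathfrak H=\overline{\rm span}\{A^{*n}C^*\mathfrak N\}$. *)

(* Defs.v *)
From Stdlib Require Import Reals.
Open Scope R_scope.

Record Cx := mkC { Cre : R; Cim : R }.
Definition C0 : Cx := mkC 0 0.
Definition C1 : Cx := mkC 1 0.
Definition Cadd (a b : Cx) : Cx := mkC (Cre a + Cre b) (Cim a + Cim b).
Definition Cmul (a b : Cx) : Cx :=
  mkC (Cre a * Cre b - Cim a * Cim b) (Cre a * Cim b + Cim a * Cre b).
Definition Cconj (a : Cx) : Cx := mkC (Cre a) (- Cim a).

Record HilbertSpace := {
  hs_carrier :> Type;
  vzero : hs_carrier;
  vadd : hs_carrier -> hs_carrier -> hs_carrier;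
  vscal : Cx -> hs_carrier -> hs_carrier;
  inner : hs_carrier -> hs_carrier -> Cx;
  vadd_assoc : forall x y z, vadd x (vadd y z) = vadd (vadd x y) z;
  vadd_comm : forall x y, vadd x y = vadd y x;
  vadd_0 : forall x, vadd x vzero = x;
  vadd_opp : forall x, vadd x (vscal (mkC (-1) 0) x) = vzero;
  vscal_1 : forall x, vscal C1 x = x;
  vscal_mul : forall a b x, vscal a (vscal b x) = vscal (Cmul a b) x;
  vscal_addv : forall a x y, vscal a (vadd x y) = vadd (vscal a x) (vscal a y);
  vscal_adds : forall a b x, vscal (Cadd a b) x = vadd (vscal a x) (vscal b x);
  inner_addl : forall x y z, inner (vadd x y) z = Cadd (inner x z) (inner y z);
  inner_scall : forall a x y, inner (vscal a x) y = Cmul a (inner x y);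
  inner_conj : forall x y, inner y x = Cconj (inner x y);
  inner_pos : forall x, 0 <= Cre (inner x x);
  inner_def : forall x, inner x x = C0 -> x = vzero;
  hs_complete : forall u : nat -> hs_carrier,
    (forall eps, eps > 0 -> exists N, forall m n, (N <= m)%nat -> (N <= n)%nat ->
        sqrt (Cre (inner (vadd (u m) (vscal (mkC (-1) 0) (u n)))
                          (vadd (u m) (vscal (mkC (-1) 0) (u n))))) < eps) ->
    exists x, forall eps, eps > 0 -> exists N, forall n, (N <= n)%nat ->
        sqrt (Cre (inner (vadd (u n) (vscal (mkC (-1) 0) x))
                          (vadd (u n) (vscal (mkC (-1) 0) x)))) < eps
}.

Arguments vzero {h}.
Arguments vadd {h}.
Arguments vscal {h}.
Arguments inner {h}.

Section HilbertNotions.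
Variable H : HilbertSpace.

Definition vsub (x y : H) : H := vadd x (vscal (mkC (-1) 0) y).
Definition norm (x : H) : R := sqrt (Cre (inner x x)).

Definition converges (u : nat -> H) (x : H) : Prop :=
  forall eps, eps > 0 -> exists N, forall n, (N <= n)%nat -> norm (vsub (u n) x) < eps.

Definition subspace (S : H -> Prop) : Prop :=
  S vzero /\ (forall x y, S x -> S y -> S (vadd x y)) /\
  (forall a x, S x -> S (vscal a x)).
Definition closed_set (S : H -> Prop) : Prop :=
  forall (u : nat -> H) x, (forall n, S (u n)) -> converges u x -> S x.
Definition closed_subspace (S : H -> Prop) : Prop := subspace S /\ closed_set S.

Definition orth (S : H -> Prop) (x : H) : Prop := forall y, S y -> inner x y = C0.

Inductive span (S : H -> Prop) : H -> Prop :=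
  | span_0 : span S vzero
  | span_in : forall x, S x -> span S x
  | span_add : forall x y, span S x -> span S y -> span S (vadd x y)
  | span_scal : forall a x, span S x -> span S (vscal a x).
Definition closure (S : H -> Prop) (x : H) : Prop :=
  exists u : nat -> H, (forall n, S (u n)) /\ converges u x.

Definition is_orth_proj (S : H -> Prop) (P : H -> H) : Prop :=
  forall x, S (P x) /\ orth S (vsub x (P x)).

Definition linear_op (T : H -> H) : Prop :=
  (forall x y, T (vadd x y) = vadd (T x) (T y)) /\
  (forall a x, T (vscal a x) = vscal a (T x)).
Definition contraction (T : H -> H) : Prop :=
  linear_op T /\ forall x, norm (T x) <= norm x.
Definition is_adjoint (T Ts : H -> H) : Prop :=
  forall x y, inner (T x) y = inner x (Ts y).

(* A0 : dom A0 = S -> H, a Hermitian contraction (values off S are irrelevant) *)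
Definition hermitian_contraction (S : H -> Prop) (A0 : H -> H) : Prop :=
  (forall x y, S x -> S y -> A0 (vadd x y) = vadd (A0 x) (A0 y)) /\
  (forall a x, S x -> A0 (vscal a x) = vscal a (A0 x)) /\
  (forall x, S x -> norm (A0 x) <= norm x) /\
  (forall x y, S x -> S y -> inner (A0 x) y = inner x (A0 y)).

Definition simple_op (S : H -> Prop) (A0 : H -> H) : Prop :=
  ~ (exists L : H -> Prop, closed_subspace L /\ (forall x, L x -> S x) /\
       (exists x, L x /\ x <> vzero) /\ (forall x, L x -> L (A0 x))).

Definition qsc_operator (T Ts : H -> H) : Prop :=
  contraction T /\ is_adjoint T Ts /\ exists x, x <> vzero /\ T x = Ts x.

Definition qsc_extension (S : H -> Prop) (A0 T Ts : H -> H) : Prop :=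
  qsc_operator T Ts /\ (forall x, S x -> T x = A0 x) /\ (forall x, S x -> Ts x = A0 x).

Definition N_minimal (N : H -> Prop) (T : H -> H) : Prop :=
  forall x, closure (span (fun y => exists n f, N f /\ y = Nat.iter n T f)) x.

(* block entries of T = [[D, C], [B, A]] on N (+) Hh, P = projection onto Hh *)
Definition blkA (P T : H -> H) (h : H) : H := P (T h).            (* Hh -> Hh *)
Definition blkB (P T : H -> H) (f : H) : H := P (T f).            (* N -> Hh *)
Definition blkAstar (P Ts : H -> H) (h : H) : H := P (Ts h).      (* A* : Hh -> Hh *)
Definition blkCstar (P Ts : H -> H) (f : H) : H := P (Ts f).      (* C* : N -> Hh *)

Definition pqs_minimal (Hh : H -> Prop) (P T Ts : H -> H) : Prop :=
  (forall h, Hh h -> closure (span (fun y => exists n f, orth Hh f /\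
       y = Nat.iter n (blkA P T) (blkB P T f))) h) /\
  (forall h, Hh h -> closure (span (fun y => exists n f, orth Hh f /\
       y = Nat.iter n (blkAstar P Ts) (blkCstar P Ts f))) h).

End HilbertNotions.

(* Main.v *)
Require Import Defs.
From Stdlib Require Import Reals Lra Psatz Classical ClassicalEpsilon.
Open Scope R_scope.

Lemma Cx_eq (a b : Cx) : Cre a = Cre b -> Cim a = Cim b -> a = b.
Proof. destruct a, b; simpl; intros; subst; reflexivity. Qed.

Ltac cxs := apply Cx_eq; simpl; try ring; try field.

Definition nsq {H : HilbertSpace} (x : H) : R := Cre (inner x x).

Lemma inner_zero_l {H : HilbertSpace} (z : H) : inner vzero z = C0.
Proof.
  pose proof (inner_addl H vzero vzero z) as E. rewrite vadd_0 in E.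
  assert (E1 := f_equal Cre E). assert (E2 := f_equal Cim E). simpl in E1, E2.
  apply Cx_eq; simpl; lra.
Qed.

Lemma inner_addr {H : HilbertSpace} (x y z : H) :
  inner x (vadd y z) = Cadd (inner x y) (inner x z).
Proof.
  rewrite (inner_conj H (vadd y z) x), inner_addl, (inner_conj H x y), (inner_conj H x z).
  cxs.
Qed.

Lemma inner_scalr {H : HilbertSpace} (c : Cx) (x y : H) :
  inner x (vscal c y) = Cmul (Cconj c) (inner x y).
Proof.
  rewrite (inner_conj H (vscal c y) x), inner_scall, (inner_conj H x y). cxs.
Qed.

Lemma inner_zero_r {H : HilbertSpace} (z : H) : inner z vzero = C0.
Proof. rewrite (inner_conj H vzero z), inner_zero_l. cxs. Qed.

Lemma vsub_zero_eq {H : HilbertSpace} (u w : H) : vsub H u w = vzero -> u = w.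
Proof.
  unfold vsub; intro E.
  rewrite <- (vadd_0 H u), <- (vadd_opp H w), (vadd_comm H w), vadd_assoc, E,
    vadd_comm, vadd_0. reflexivity.
Qed.

Lemma vext {H : HilbertSpace} (u w : H) : (forall z, inner u z = inner w z) -> u = w.
Proof.
  intro E. apply vsub_zero_eq. apply inner_def.
  unfold vsub at 1. rewrite inner_addl, inner_scall, !E. cxs.
Qed.

Ltac vec_eq := apply vext; let z := fresh "z" in intro z; unfold vsub;
  repeat rewrite ?inner_addl, ?inner_scall, ?inner_zero_l; cxs.

Lemma re_sym {H : HilbertSpace} (x y : H) : Cre (inner y x) = Cre (inner x y).
Proof. rewrite (inner_conj H x y). reflexivity. Qed.

Lemma nsq_add {H : HilbertSpace} (a b : H) :
  nsq (vadd a b) = nsq a + nsq b + 2 * Cre (inner a b).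
Proof.
  unfold nsq. rewrite inner_addl, !inner_addr. simpl. rewrite (re_sym a b). ring.
Qed.

Lemma nsq_scal {H : HilbertSpace} (t : R) (a : H) :
  nsq (vscal (mkC t 0) a) = t * t * nsq a.
Proof. unfold nsq. rewrite inner_scall, inner_scalr. simpl. ring. Qed.

Lemma re_scalr {H : HilbertSpace} (t : R) (a b : H) :
  Cre (inner a (vscal (mkC t 0) b)) = t * Cre (inner a b).
Proof. rewrite inner_scalr. simpl. ring. Qed.

Lemma nsq_pos {H : HilbertSpace} (a : H) : 0 <= nsq a.
Proof. apply inner_pos. Qed.

Lemma quad (A B r : R) : (forall t, 0 <= A + 2*t*r + t*t*B) -> 0 <= B -> r*r <= A*B.
Proof.
  intros Hq HB. assert (HA := Hq 0).
  destruct (Req_dec B 0) as [E|E].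
  - subst B. destruct (Req_dec r 0) as [Er|Er]. { subst; lra. }
    specialize (Hq (-(A+1)/(2*r))).
    replace (A + 2 * (- (A + 1) / (2 * r)) * r + - (A + 1) / (2 * r) * (- (A + 1) / (2 * r)) * 0)
      with (-1) in Hq by (field; auto). lra.
  - specialize (Hq (-r/B)).
    replace (A + 2 * (- r / B) * r + - r / B * (- r / B) * B) with ((A*B - r*r)/B) in Hq
      by (field; auto).
    assert (0 < B) by lra.
    assert (0 <= A*B - r*r); [|lra].
    replace (A*B - r*r) with ((A*B - r*r)/B * B) by (field; auto). nra.
Qed.

Lemma cs {H : HilbertSpace} (a b : H) : Cre (inner a b) * Cre (inner a b) <= nsq a * nsq b.
Proof.
  apply quad; [|apply nsq_pos]. intro t.
  pose proof (nsq_pos (vadd a (vscal (mkC t 0) b))) as P.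
  rewrite nsq_add, nsq_scal, re_scalr in P. lra.
Qed.

Lemma norm_nsq {H : HilbertSpace} (a : H) : norm H a = sqrt (nsq a).
Proof. reflexivity. Qed.

Lemma norm_pos {H : HilbertSpace} (a : H) : 0 <= norm H a.
Proof. apply sqrt_pos. Qed.

Lemma cs_abs {H : HilbertSpace} (a b : H) : Rabs (Cre (inner a b)) <= norm H a * norm H b.
Proof.
  rewrite !norm_nsq, <- sqrt_Rsqr_abs, <- sqrt_mult by apply nsq_pos.
  apply sqrt_le_1_alt. unfold Rsqr. apply cs.
Qed.

Lemma norm_lt_nsq {H : HilbertSpace} (a : H) eps : norm H a < eps -> nsq a < eps * eps.
Proof.
  intro L. rewrite norm_nsq in L. pose proof (sqrt_sqrt _ (nsq_pos a)).
  pose proof (sqrt_pos (nsq a)). nra.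
Qed.

Lemma nsq_lt_norm {H : HilbertSpace} (a : H) eps : 0 < eps -> nsq a < eps * eps -> norm H a < eps.
Proof.
  intros P L. rewrite norm_nsq. rewrite <- (sqrt_square eps) by lra.
  apply sqrt_lt_1_alt. split; [apply nsq_pos| lra].
Qed.

Lemma re_sub_l {H : HilbertSpace} (a b w : H) :
  Cre (inner (vsub H a b) w) = Cre (inner a w) - Cre (inner b w).
Proof. unfold vsub. rewrite inner_addl, inner_scall. simpl. ring. Qed.

Lemma cont_re {H : HilbertSpace} (u : nat -> H) x : converges H u x ->
  forall w eps, eps > 0 -> exists N, forall n, (N <= n)%nat ->
    Rabs (Cre (inner (u n) w) - Cre (inner x w)) < eps.
Proof.
  intros C w eps Pe.
  pose proof (norm_pos w) as Pw.
  destruct (C (eps / (norm H w + 1))) as [N HN].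
  { apply Rdiv_lt_0_compat; lra. }
  exists N. intros n Hn. specialize (HN n Hn).
  rewrite <- re_sub_l.
  eapply Rle_lt_trans; [apply cs_abs|].
  pose proof (norm_pos (vsub H (u n) x)).
  assert (eps / (norm H w + 1) * (norm H w + 1) = eps) by (field; lra).
  nra.
Qed.

Lemma small_zero (r : R) : (forall eps, eps > 0 -> Rabs r < eps) -> r = 0.
Proof.
  intro Hs. destruct (Req_dec r 0) as [|E]; auto.
  assert (P : Rabs r > 0) by (apply Rabs_pos_lt; auto).
  specialize (Hs _ P). lra.
Qed.

Lemma orth_closed_re {H : HilbertSpace} (u : nat -> H) x w : converges H u x ->
  (forall n, Cre (inner (u n) w) = 0) -> Cre (inner x w) = 0.
Proof.
  intros C Z. apply small_zero. intros eps Pe.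
  destruct (cont_re u x C w eps Pe) as [N HN]. specialize (HN N (le_n _)).
  rewrite Z in HN. rewrite <- Rabs_Ropp. replace (- Cre (inner x w)) with (0 - Cre (inner x w)) by ring. auto.
Qed.

Lemma im_via_re {H : HilbertSpace} (a w : H) :
  Cre (inner a (vscal (mkC 0 (-1)) w)) = - Cim (inner a w).
Proof. rewrite inner_scalr. simpl. ring. Qed.

Lemma orth_closed {H : HilbertSpace} (u : nat -> H) x w : converges H u x ->
  (forall n, inner (u n) w = C0) -> inner x w = C0.
Proof.
  intros C Z. apply Cx_eq.
  - apply (orth_closed_re u x w C). intro n. rewrite Z. reflexivity.
  - simpl. assert (E : Cre (inner x (vscal (mkC 0 (-1)) w)) = 0).
    { apply (orth_closed_re u x _ C). intro n. rewrite im_via_re, Z. simpl. ring. }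
    rewrite im_via_re in E. lra.
Qed.

Lemma parallelogram {H : HilbertSpace} (p q : H) :
  nsq (vadd p q) + nsq (vsub H p q) = 2 * nsq p + 2 * nsq q.
Proof.
  unfold vsub. rewrite !nsq_add, nsq_scal, re_scalr. ring.
Qed.

Lemma arch (e : R) : e > 0 -> exists N, forall n, (N <= n)%nat -> / (INR n + 1) < e.
Proof.
  intro Pe. destruct (archimed_cor1 e Pe) as [N [HN PN]].
  exists N. intros n Hn. apply le_INR in Hn.
  assert (0 < INR N) by (apply lt_0_INR; auto).
  eapply Rle_lt_trans; [|apply HN].
  apply Rinv_le_contravar; lra.
Qed.

Lemma inf_exists {H : HilbertSpace} (V : H -> Prop) (V0 : V vzero) (x : H) :
  exists d2, (forall v, V v -> d2 <= nsq (vsub H x v)) /\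
    (forall eps, eps > 0 -> exists v, V v /\ nsq (vsub H x v) < d2 + eps).
Proof.
  set (E := fun r => exists v, V v /\ r = - nsq (vsub H x v)).
  assert (Hb : bound E).
  { exists 0. intros r [v [_ ->]]. pose proof (nsq_pos (vsub H x v)). lra. }
  assert (Hne : exists r, E r) by (exists (- nsq (vsub H x vzero)); exists vzero; auto).
  destruct (completeness E Hb Hne) as [m [Hub Hlub]].
  exists (-m). split.
  - intros v Vv. assert (E (- nsq (vsub H x v))) by (exists v; auto).
    specialize (Hub _ H0). lra.
  - intros eps Pe. apply NNPP. intro Hn.
    assert (is_upper_bound E (m - eps)).
    { intros r [v [Vv ->]]. destruct (Rlt_le_dec (nsq (vsub H x v)) (-m + eps)) as [L|L].
      - exfalso. apply Hn. exists v. auto.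
      - lra. }
    specialize (Hlub _ H0). lra.
Qed.

Lemma approx {H : HilbertSpace} (V : H -> Prop) (V0 : V vzero)
  (Vadd : forall a b, V a -> V b -> V (vadd a b))
  (Vscal : forall c a, V a -> V (vscal c a)) (x : H) :
  exists m0, (exists u, (forall n, V (u n)) /\ converges H u m0) /\
    forall v, V v -> inner (vsub H x m0) v = C0.
Proof.
  destruct (inf_exists V V0 x) as [d2 [Hlow Happ]].
  assert (Hseq : forall n : nat, exists v, V v /\ nsq (vsub H x v) < d2 + / (INR n + 1)).
  { intro n. apply Happ. apply Rlt_gt, Rinv_0_lt_compat. pose proof (pos_INR n). lra. }
  set (vs := fun n => proj1_sig (constructive_indefinite_description _ (Hseq n))).
  assert (Hvs : forall n, V (vs n) /\ nsq (vsub H x (vs n)) < d2 + / (INR n + 1)).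
  { intro n. unfold vs. destruct (constructive_indefinite_description _ (Hseq n)). auto. }
  assert (Hc : forall m n, nsq (vsub H (vs m) (vs n)) <= 2 * / (INR m + 1) + 2 * / (INR n + 1)).
  { intros m n. destruct (Hvs m) as [Vm Lm]. destruct (Hvs n) as [Vn Ln].
    pose proof (parallelogram (vsub H x (vs n)) (vsub H x (vs m))) as Pg.
    assert (E1 : vsub H (vsub H x (vs n)) (vsub H x (vs m)) = vsub H (vs m) (vs n)) by vec_eq.
    assert (E2 : vadd (vsub H x (vs n)) (vsub H x (vs m)) =
       vscal (mkC 2 0) (vsub H x (vscal (mkC (/2) 0) (vadd (vs n) (vs m))))) by vec_eq.
    rewrite E1, E2, nsq_scal in Pg.
    assert (d2 <= nsq (vsub H x (vscal (mkC (/ 2) 0) (vadd (vs n) (vs m))))).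
    { apply Hlow. apply Vscal, Vadd; auto. }
    lra. }
  destruct (hs_complete H vs) as [m0 Hm0].
  { intros eps Pe. destruct (arch (eps * eps / 4)) as [N HN].
    { apply Rlt_gt. apply Rdiv_lt_0_compat; nra. }
    exists N. intros m n Hm Hn. change (norm H (vsub H (vs m) (vs n)) < eps).
    apply nsq_lt_norm; [lra|]. specialize (Hc m n). pose proof (HN m Hm). pose proof (HN n Hn).
    lra. }
  assert (Cm0 : converges H vs m0) by exact Hm0.
  exists m0. split; [exists vs; split; [intro n; apply Hvs | exact Cm0]|].
  assert (Hre : forall v, V v -> Cre (inner (vsub H x m0) v) = 0).
  { intros v Vv. set (r := Cre (inner (vsub H x m0) v)). set (B := nsq v).
    assert (Ht : forall t, 2 * t * r <= t * t * B).
    { intro t. apply Rnot_lt_le. intro Hg. set (g := 2 * t * r - t * t * B).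
      assert (Pg : g > 0) by (unfold g; lra).
      assert (Pd : g / (4 * (Rabs t + 1)) > 0).
      { apply Rlt_gt, Rdiv_lt_0_compat; [lra|]. pose proof (Rabs_pos t). lra. }
      destruct (cont_re vs m0 Cm0 v _ Pd) as [N1 HN1].
      destruct (arch (g / 2)) as [N2 HN2]; [lra|].
      set (n := Nat.max N1 N2).
      specialize (HN1 n (Nat.le_max_l _ _)). specialize (HN2 n (Nat.le_max_r _ _)).
      destruct (Hvs n) as [Vn Ln].
      assert (Hl : d2 <= nsq (vsub H x (vadd (vs n) (vscal (mkC t 0) v)))) by (apply Hlow; auto).
      assert (E : vsub H x (vadd (vs n) (vscal (mkC t 0) v)) =
                  vadd (vsub H x (vs n)) (vscal (mkC (-t) 0) v)) by vec_eq.
      rewrite E, nsq_add, nsq_scal, re_scalr in Hl.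
      assert (Er : Cre (inner (vsub H x (vs n)) v) = r - (Cre (inner (vs n) v) - Cre (inner m0 v))).
      { unfold r. rewrite !re_sub_l. ring. }
      rewrite Er in Hl. fold B in Hl.
      set (e := Cre (inner (vs n) v) - Cre (inner m0 v)) in *.
      assert (Hte : 2 * t * e <= 2 * Rabs t * Rabs e).
      { assert (t * e <= Rabs (t * e)) by apply RRle_abs. rewrite Rabs_mult in H0. lra. }
      assert (Hbd : 2 * Rabs t * Rabs e <= 2 * Rabs t * (g / (4 * (Rabs t + 1)))).
      { pose proof (Rabs_pos t). apply Rmult_le_compat_l; lra. }
      assert (Hfin : 2 * Rabs t * (g / (4 * (Rabs t + 1))) < g / 2).
      { pose proof (Rabs_pos t).
        replace (2 * Rabs t * (g / (4 * (Rabs t + 1)))) with (g / 2 * (Rabs t / (Rabs t + 1))) by (field; lra).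
        assert (Rabs t / (Rabs t + 1) < 1).
        { apply (Rmult_lt_reg_r (Rabs t + 1)); [lra|]. unfold Rdiv. rewrite Rmult_assoc, Rinv_l; lra. }
        nra. }
      unfold g in *. nra. }
    assert (PB : 0 <= B) by apply nsq_pos.
    specialize (Ht (r / (B + 1))).
    set (s := r / (B + 1)) in Ht.
    assert (Es : r = s * (B + 1)) by (unfold s; field; lra).
    rewrite Es in Ht. assert (Hss : s * s <= 0) by nra. assert (Hs0 : s = 0) by nra. rewrite Es, Hs0. ring. }
  intros v Vv. apply Cx_eq.
  - apply Hre; auto.
  - simpl. pose proof (Hre _ (Vscal (mkC 0 (-1)) v Vv)) as Hi.
    rewrite im_via_re in Hi. lra.
Qed.

Lemma core_min {H : HilbertSpace} (Hh : H -> Prop) (P U Us A0 : H -> H) :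
  is_orth_proj H Hh P -> is_adjoint H U Us -> (forall x, Hh x -> Us x = A0 x) ->
  simple_op H Hh A0 -> N_minimal H (orth H Hh) U.
Proof.
  intros HP Had Hag Hs x.
  set (SS := fun y => exists n f, orth H Hh f /\ y = Nat.iter n U f).
  destruct (approx (span H SS) (span_0 H SS) (span_add H SS) (span_scal H SS) x)
    as [m0 [[u [Vu Cu]] Horth]].
  destruct (classic (vsub H x m0 = vzero)) as [E|E].
  - apply vsub_zero_eq in E. subst. exists u. auto.
  - exfalso; apply Hs.
    set (L := fun z => forall v, span H SS v -> inner z v = C0).
    assert (LH : forall z, L z -> Hh z).
    { intros z Hz. destruct (HP z) as [PHh Porth].
      assert (Hd : vsub H z (P z) = vzero).
      { apply inner_def. unfold vsub at 1. rewrite inner_addl, inner_scall.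
        rewrite Hz. 2:{ apply span_in. exists 0%nat, (vsub H z (P z)). split; auto. }
        rewrite (inner_conj H (vsub H z (P z)) (P z)), (Porth (P z) PHh). cxs. }
      apply vsub_zero_eq in Hd. rewrite Hd. auto. }
    exists L. split; [|split; [exact LH|split]].
    + split; [split; [|split]|].
      * intros v _. apply inner_zero_l.
      * intros a b Ha Hb v Vv. rewrite inner_addl, Ha, Hb by auto. cxs.
      * intros c a Ha v Vv. rewrite inner_scall, Ha by auto. cxs.
      * intros w z Hw Cz v Vv. apply (orth_closed w z v Cz). intro n. apply Hw; auto.
    + exists (vsub H x m0). split; auto.
    + intros z Hz. rewrite <- Hag by (apply LH; auto).
      intros v Vv. induction Vv as [|v [n [f [Hf ->]]]| a b _ IHa _ IHb | c a _ IHa].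
      * apply inner_zero_r.
      * rewrite (inner_conj H (Nat.iter n U f) (Us z)), <- Had.
        rewrite (inner_conj H z (U (Nat.iter n U f))), Hz. cxs.
        apply span_in. exists (S n), f. split; auto.
      * rewrite inner_addr, IHa, IHb. cxs.
      * rewrite inner_scalr, IHa. cxs.
Qed.

Lemma core_simple {H : HilbertSpace} (Hh : H -> Prop) (U Us A0 : H -> H) :
  is_adjoint H U Us -> (forall x, Hh x -> Us x = A0 x) ->
  N_minimal H (orth H Hh) U -> simple_op H Hh A0.
Proof.
  intros Had Hag Hm [L [[[L0 [La Ls]] Lc] [LH [[x [Lx xn]] Linv]]]].
  apply xn. apply inner_def.
  assert (K : forall n f w, orth H Hh f -> L w -> inner (Nat.iter n U f) w = C0).
  { induction n as [|n IH]; intros f w Hf Lw.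
    - simpl. apply Hf. apply LH; auto.
    - change (Nat.iter (S n) U f) with (U (Nat.iter n U f)). rewrite Had.
      rewrite Hag by (apply LH; auto). apply IH; auto. }
  assert (K2 : forall v w, span H (fun y => exists n f, orth H Hh f /\ y = Nat.iter n U f) v ->
     L w -> inner v w = C0).
  { intros v w Vv Lw. induction Vv as [|v [n [f [Hf ->]]]| a b _ IHa _ IHb | c a _ IHa].
    - apply inner_zero_l.
    - apply K; auto.
    - rewrite inner_addl, IHa, IHb. cxs.
    - rewrite inner_scall, IHa. cxs. }
  destruct (Hm x) as [u [Vu Cu]].
  apply (orth_closed u x x Cu). intro n. apply K2; auto.
Qed.

Lemma inner_vsub_l {H : HilbertSpace} (a b z : H) :
  inner (vsub H a b) z = Cadd (inner a z) (Cmul (mkC (-1) 0) (inner b z)).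
Proof. unfold vsub. rewrite inner_addl, inner_scall. reflexivity. Qed.

Lemma sub_closed {H : HilbertSpace} (Hh : H -> Prop) : subspace H Hh ->
  forall a b, Hh a -> Hh b -> Hh (vsub H a b).
Proof. intros [_ [Ha Hs]] a b A B. unfold vsub. apply Ha; auto. Qed.

Lemma proj_unique {H : HilbertSpace} (Hh : H -> Prop) P : subspace H Hh -> is_orth_proj H Hh P ->
  forall x a, Hh a -> orth H Hh (vsub H x a) -> P x = a.
Proof.
  intros Sb HP x a Ha Ho. destruct (HP x) as [PH Po].
  apply vsub_zero_eq, inner_def.
  assert (E : vsub H (P x) a = vsub H (vsub H x a) (vsub H x (P x))) by vec_eq.
  assert (D : Hh (vsub H (P x) a)) by (apply sub_closed; auto).
  rewrite E at 1. rewrite inner_vsub_l, Ho, Po by auto. cxs.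
Qed.

Lemma P_id {H : HilbertSpace} (Hh : H -> Prop) P : subspace H Hh -> is_orth_proj H Hh P ->
  forall x, Hh x -> P x = x.
Proof.
  intros Sb HP x Hx. apply (proj_unique Hh P Sb HP); auto.
  intros y _. rewrite inner_vsub_l. cxs.
Qed.

Lemma P_orth {H : HilbertSpace} (Hh : H -> Prop) P : subspace H Hh -> is_orth_proj H Hh P ->
  forall x, orth H Hh x -> P x = vzero.
Proof.
  intros Sb HP x Hx. apply (proj_unique Hh P Sb HP); [apply Sb|].
  intros y Hy. rewrite inner_vsub_l, inner_zero_l, Hx by auto. cxs.
Qed.

Lemma P_add {H : HilbertSpace} (Hh : H -> Prop) P : subspace H Hh -> is_orth_proj H Hh P ->
  forall x y, P (vadd x y) = vadd (P x) (P y).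
Proof.
  intros Sb HP x y. destruct (HP x) as [Px Ox]. destruct (HP y) as [Py Oy].
  apply (proj_unique Hh P Sb HP); [apply Sb; auto|].
  intros z Hz.
  assert (E : vsub H (vadd x y) (vadd (P x) (P y)) = vadd (vsub H x (P x)) (vsub H y (P y))) by vec_eq.
  rewrite E, inner_addl, Ox, Oy by auto. cxs.
Qed.

Lemma P_scal {H : HilbertSpace} (Hh : H -> Prop) P : subspace H Hh -> is_orth_proj H Hh P ->
  forall c x, P (vscal c x) = vscal c (P x).
Proof.
  intros Sb HP c x. destruct (HP x) as [Px Ox].
  apply (proj_unique Hh P Sb HP); [apply Sb; auto|].
  intros z Hz.
  assert (E : vsub H (vscal c x) (vscal c (P x)) = vscal c (vsub H x (P x))) by vec_eq.
  rewrite E, inner_scall, Ox by auto. cxs.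
Qed.

Lemma P_sub {H : HilbertSpace} (Hh : H -> Prop) P : subspace H Hh -> is_orth_proj H Hh P ->
  forall x y, P (vsub H x y) = vsub H (P x) (P y).
Proof. intros Sb HP x y. unfold vsub. rewrite (P_add Hh P Sb HP), (P_scal Hh P Sb HP). reflexivity. Qed.

Lemma P_nsq {H : HilbertSpace} (Hh : H -> Prop) P : is_orth_proj H Hh P ->
  forall x, nsq (P x) <= nsq x.
Proof.
  intros HP x. destruct (HP x) as [Px Ox].
  assert (E : x = vadd (P x) (vsub H x (P x))) by vec_eq.
  pattern x at 2. rewrite E. rewrite nsq_add, re_sym, Ox by auto. simpl.
  pose proof (nsq_pos (vsub H x (P x))). lra.
Qed.

Lemma P_conv {H : HilbertSpace} (Hh : H -> Prop) P : subspace H Hh -> is_orth_proj H Hh P ->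
  forall u h, converges H u h -> converges H (fun n => P (u n)) (P h).
Proof.
  intros Sb HP u h C eps Pe. destruct (C eps Pe) as [N HN]. exists N. intros n Hn.
  eapply Rle_lt_trans; [|apply (HN n Hn)].
  rewrite <- (P_sub Hh P Sb HP). unfold norm. apply sqrt_le_1_alt. apply (P_nsq Hh P HP).
Qed.

Lemma orth_sub {H : HilbertSpace} (Hh : H -> Prop) :
  (forall a b, orth H Hh a -> orth H Hh b -> orth H Hh (vadd a b)) /\
  (forall c a, orth H Hh a -> orth H Hh (vscal c a)).
Proof.
  split.
  - intros a b Ha Hb y Hy. rewrite inner_addl, Ha, Hb by auto. cxs.
  - intros c a Ha y Hy. rewrite inner_scall, Ha by auto. cxs.
Qed.

Lemma idem_zero {H : HilbertSpace} (a : H) : vadd a a = a -> a = vzero.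
Proof.
  intro E. apply vext. intro z. rewrite inner_zero_l.
  assert (F := f_equal (fun w => inner w z) E). simpl in F. rewrite inner_addl in F.
  assert (F1 := f_equal Cre F). assert (F2 := f_equal Cim F). simpl in F1, F2.
  apply Cx_eq; simpl; lra.
Qed.

Lemma lin_zero {H : HilbertSpace} (U : H -> H) : linear_op H U -> U vzero = vzero.
Proof.
  intros [La _]. apply idem_zero. rewrite <- La, vadd_0. reflexivity.
Qed.

Definition SA {H : HilbertSpace} (Hh : H -> Prop) (P U : H -> H) :=
  fun y => exists n f, orth H Hh f /\ y = Nat.iter n (blkA H P U) (blkB H P U f).
Definition SU {H : HilbertSpace} (Hh : H -> Prop) (U : H -> H) :=
  fun y => exists n f, orth H Hh f /\ y = Nat.iter n U f.

Lemma VA_Hh {H : HilbertSpace} (Hh : H -> Prop) P U : subspace H Hh -> is_orth_proj H Hh P ->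
  forall w, span H (SA Hh P U) w -> Hh w.
Proof.
  intros Sb HP w Vw. induction Vw as [|v [n [f [Hf ->]]]| a b _ IHa _ IHb | c a _ IHa].
  - apply Sb.
  - destruct n; simpl; apply HP.
  - apply Sb; auto.
  - apply Sb; auto.
Qed.

Lemma VA_inv {H : HilbertSpace} (Hh : H -> Prop) P U : subspace H Hh -> is_orth_proj H Hh P ->
  linear_op H U -> forall w, span H (SA Hh P U) w -> span H (SA Hh P U) (P (U w)).
Proof.
  intros Sb HP LU w Vw. induction Vw as [|v [n [f [Hf ->]]]| a b _ IHa _ IHb | c a _ IHa].
  - rewrite (lin_zero U LU), (P_id Hh P Sb HP) by apply Sb. apply span_0.
  - apply span_in. exists (S n), f. split; auto.
  - destruct LU as [La Ls]. rewrite La, (P_add Hh P Sb HP). apply span_add; auto.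
  - destruct LU as [La Ls]. rewrite Ls, (P_scal Hh P Sb HP). apply span_scal; auto.
Qed.

Lemma decomp {H : HilbertSpace} (Hh : H -> Prop) P U : subspace H Hh -> is_orth_proj H Hh P ->
  linear_op H U -> forall n f, orth H Hh f -> exists g w, orth H Hh g /\
    span H (SA Hh P U) w /\ Nat.iter n U f = vadd g w.
Proof.
  intros Sb HP LU n f Hf. induction n as [|n [g [w [Hg [Vw E]]]]].
  - exists f, vzero. split; [auto|split; [apply span_0|]]. simpl. rewrite vadd_0. auto.
  - exists (vadd (vsub H (U g) (P (U g))) (vsub H (U w) (P (U w)))), (vadd (P (U g)) (P (U w))).
    split; [|split].
    + apply orth_sub; apply HP.
    + apply span_add; [|apply (VA_inv Hh P U Sb HP LU); auto].
      apply span_in. exists 0%nat, g. split; auto.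
    + change (Nat.iter (S n) U f) with (U (Nat.iter n U f)). rewrite E.
      destruct LU as [La _]. rewrite La. vec_eq.
Qed.

Lemma to_VA {H : HilbertSpace} (Hh : H -> Prop) P U : subspace H Hh -> is_orth_proj H Hh P ->
  linear_op H U -> forall v, span H (SU Hh U) v -> span H (SA Hh P U) (P v).
Proof.
  intros Sb HP LU v Vv. induction Vv as [|v [n [f [Hf ->]]]| a b _ IHa _ IHb | c a _ IHa].
  - rewrite (P_id Hh P Sb HP) by apply Sb. apply span_0.
  - destruct (decomp Hh P U Sb HP LU n f Hf) as [g [w [Hg [Vw E]]]].
    rewrite E, (P_add Hh P Sb HP), (P_orth Hh P Sb HP g Hg), (P_id Hh P Sb HP w)
      by (apply (VA_Hh Hh P U Sb HP); auto).
    rewrite vadd_comm, vadd_0. auto.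
  - rewrite (P_add Hh P Sb HP). apply span_add; auto.
  - rewrite (P_scal Hh P Sb HP). apply span_scal; auto.
Qed.

Lemma G1 {H : HilbertSpace} (Hh : H -> Prop) P U : subspace H Hh -> is_orth_proj H Hh P ->
  linear_op H U -> N_minimal H (orth H Hh) U ->
  forall h, Hh h -> closure H (span H (SA Hh P U)) h.
Proof.
  intros Sb HP LU Hm h Hh0. destruct (Hm h) as [u [Vu Cu]].
  exists (fun n => P (u n)). split.
  - intro n. apply (to_VA Hh P U Sb HP LU). apply Vu.
  - rewrite <- (P_id Hh P Sb HP h Hh0). apply (P_conv Hh P Sb HP). auto.
Qed.

Lemma span_mono {H : HilbertSpace} (S1 S2 : H -> Prop) :
  (forall y, S1 y -> span H S2 y) -> forall v, span H S1 v -> span H S2 v.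
Proof.
  intros Hs v Vv. induction Vv.
  - apply span_0.
  - auto.
  - apply span_add; auto.
  - apply span_scal; auto.
Qed.

Lemma SU_inv {H : HilbertSpace} (Hh : H -> Prop) U : linear_op H U ->
  forall w, span H (SU Hh U) w -> span H (SU Hh U) (U w).
Proof.
  intros LU w Vw. induction Vw as [|v [n [f [Hf ->]]]| a b _ IHa _ IHb | c a _ IHa].
  - rewrite (lin_zero U LU). apply span_0.
  - apply span_in. exists (S n), f. split; auto.
  - destruct LU as [La Ls]. rewrite La. apply span_add; auto.
  - destruct LU as [La Ls]. rewrite Ls. apply span_scal; auto.
Qed.

Lemma G2 {H : HilbertSpace} (Hh : H -> Prop) P U : subspace H Hh -> is_orth_proj H Hh P ->
  linear_op H U -> (forall h, Hh h -> closure H (span H (SA Hh P U)) h) ->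
  N_minimal H (orth H Hh) U.
Proof.
  intros Sb HP LU Hc x.
  assert (PU : forall w, span H (SU Hh U) w -> span H (SU Hh U) (P (U w))).
  { intros w Vw.
    assert (E : P (U w) = vadd (U w) (vscal (mkC (-1) 0) (vsub H (U w) (P (U w))))) by vec_eq.
    rewrite E. apply span_add; [apply SU_inv; auto|]. apply span_scal, span_in.
    exists 0%nat, (vsub H (U w) (P (U w))). split; [apply HP|reflexivity]. }
  assert (Inc : forall y, SA Hh P U y -> span H (SU Hh U) y).
  { intros y [n [f [Hf ->]]]. induction n as [|n IH].
    - simpl. unfold blkB. apply PU. apply span_in. exists 0%nat, f. auto.
    - change (Nat.iter (S n) (blkA H P U) (blkB H P U f)) with
        (P (U (Nat.iter n (blkA H P U) (blkB H P U f)))). apply PU. auto. }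
  destruct (HP x) as [Px Ox].
  destruct (Hc (P x) Px) as [a [Va Ca]].
  exists (fun n => vadd (a n) (vsub H x (P x))). split.
  - intro n. apply span_add.
    + apply (span_mono _ _ Inc). auto.
    + apply span_in. exists 0%nat, (vsub H x (P x)). auto.
  - intros eps Pe. destruct (Ca eps Pe) as [N HN]. exists N. intros n Hn.
    assert (E : vsub H (vadd (a n) (vsub H x (P x))) x = vsub H (a n) (P x)) by vec_eq.
    rewrite E. auto.
Qed.

Lemma vext_r {H : HilbertSpace} (u w : H) : (forall z, inner z u = inner z w) -> u = w.
Proof.
  intro E. apply vext. intro z. rewrite (inner_conj H z u), (inner_conj H z w), E. reflexivity.
Qed.

Lemma adj_linear {H : HilbertSpace} (U Us : H -> H) : is_adjoint H U Us -> linear_op H Us.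
Proof.
  intro Had. split.
  - intros x y. apply vext_r. intro z. rewrite <- Had, !inner_addr, <- !Had. reflexivity.
  - intros a x. apply vext_r. intro z. rewrite <- Had, !inner_scalr, <- Had. reflexivity.
Qed.

Lemma adj_sym {H : HilbertSpace} (U Us : H -> H) : is_adjoint H U Us -> is_adjoint H Us U.
Proof.
  intros Had x y. rewrite (inner_conj H y (Us x)), <- Had, (inner_conj H x (U y)). cxs.
Qed.

Theorem proposition7p1 (H : HilbertSpace) (Hh : H -> Prop) (P A0 T Ts : H -> H) :
  closed_subspace H Hh ->
  is_orth_proj H Hh P ->
  hermitian_contraction H Hh A0 ->
  qsc_extension H Hh A0 T Ts ->
  (simple_op H Hh A0 <-> N_minimal H (orth H Hh) T) /\
  (N_minimal H (orth H Hh) T <-> pqs_minimal H Hh P T Ts).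
Proof.
  intros [Sb _] HP _ [[[LT _] [Had _]] [HT HTs]].
  assert (Had' := adj_sym T Ts Had).
  assert (LTs := adj_linear T Ts Had).
  split; split.
  - apply (core_min Hh P T Ts A0 HP Had HTs).
  - apply (core_simple Hh T Ts A0 Had HTs).
  - intro Hm. split.
    + apply (G1 Hh P T Sb HP LT Hm).
    + assert (Hs := core_simple Hh T Ts A0 Had HTs Hm).
      assert (Hm' := core_min Hh P Ts T A0 HP Had' HT Hs).
      apply (G1 Hh P Ts Sb HP LTs Hm').
  - intros [H1 _]. apply (G2 Hh P T Sb HP LT H1).
Qed.
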